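(* For every sequent $\Gamma\Rightarrow\Delta$: if $\mathsf{Grz_{Seq}}+\mathsf{cut}\vdash\Gamma\Rightarrow\Delta$, then $\mathsf{Grz_{Seq}}\vdash\Gamma\Rightarrow\Delta$.
   Context: Formulas are built from $\bot$ and atomic propositions using $\to$ and $\Box$. A sequent is $\Gamma\Rightarrow\Delta$ with $\Gamma,\Delta$ finite multisets of formulas; $\Box\Pi$ denotes the multiset $\{\Box B:B\in\Pi\}$. The (ordinary, finite-proof) sequent calculus $\mathsf{Grz_{Seq}}$ has initial sequents $\Gamma,A\Rightarrow A,\Delta$ (any formula $A$) and $\Gamma,\bot\Rightarrow\Delta$, and rules: $(\to_L)$ from $\Gamma,B\Rightarrow\Delta$ and $\Gamma\Rightarrow A,\Delta$ infer $\Gamma,A\to B\Rightarrow\Delta$; $(\to_R)$ from $\Gamma,A\Rightarrow B,\Delta$ infer $\Gamma\Rightarrow A\to B,\Delta$; $(\mathsf{refl})$ from $\Gamma,B,\Box B\Rightarrow\Delta$ infer $\Gamma,\Box B\Rightarrow\Delta$; $(\Box_{\mathsf{Grz}})$ from $\Box\Pi,\Box(A\to\Box A)\Rightarrow A$ infer $\Gamma,\Box\Pi\Rightarrow\Box A,\Delta$. The system $\mathsf{Grz_{Seq}}+\mathsf{cut}$ adds the rule $(\mathsf{cut})$: from $\Gamma\Rightarrow A,\Delta$ and $\Gamma,A\Rightarrow\Delta$ infer $\Gamma\Rightarrow\Delta$. Provability means existence of a finite derivation tree. *)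

(* Defs.v *)
From Stdlib Require Import List Permutation.
Import ListNotations.

Inductive form : Type :=
| Bot : form
| Atom : nat -> form
| Imp : form -> form -> form
| Box : form -> form.

(* A sequent Gamma => Delta with Gamma, Delta finite multisets, represented
   as lists; every rule below matches its conclusion (and is thus applicable)
   up to permutation of the lists, i.e. the lists are read as multisets. *)

Inductive derivable (cut_allowed : bool) : list form -> list form -> Prop :=
| d_init : forall G D G' D' A,
    Permutation G (A :: G') -> Permutation D (A :: D') ->
    derivable cut_allowed G D
| d_bot : forall G D G',
    Permutation G (Bot :: G') ->
    derivable cut_allowed G D
| d_impL : forall G D G' A B,
    Permutation G (Imp A B :: G') ->
    derivable cut_allowed (B :: G') D ->
    derivable cut_allowed G' (A :: D) ->
    derivable cut_allowed G D
| d_impR : forall G D D' A B,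
    Permutation D (Imp A B :: D') ->
    derivable cut_allowed (A :: G) (B :: D') ->
    derivable cut_allowed G D
| d_refl : forall G D G' B,
    Permutation G (Box B :: G') ->
    derivable cut_allowed (B :: Box B :: G') D ->
    derivable cut_allowed G D
| d_grz : forall G D G' D' Pi A,
    Permutation G (map Box Pi ++ G') ->
    Permutation D (Box A :: D') ->
    derivable cut_allowed (map Box Pi ++ [Box (Imp A (Box A))]) [A] ->
    derivable cut_allowed G D
| d_cut : forall G D A,
    cut_allowed = true ->
    derivable cut_allowed G (A :: D) ->
    derivable cut_allowed (A :: G) D ->
    derivable cut_allowed G D.

Definition GrzSeq_proves (G D : list form) : Prop := derivable false G D.
Definition GrzSeqCut_proves (G D : list form) : Prop := derivable true G D.

(* Main.v *)
Require Import Defs.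
From Stdlib Require Import List Permutation Arith Lia Classical Wf_nat.
Import ListNotations.

Lemma form_eq_dec : forall x y : form, {x = y} + {x <> y}.
Proof. decide equality; apply Nat.eq_dec. Qed.

Ltac perm_solve :=
  repeat match goal with H : Permutation _ _ |- _ =>
    rewrite (Permutation_count_occ form_eq_dec) in H end;
  apply (Permutation_count_occ form_eq_dec); let x := fresh "x" in intro x;
  repeat match goal with H : forall y : form, count_occ _ _ _ = _ |- _ => specialize (H x) end;
  repeat progress (rewrite ?count_occ_app in *; simpl in * );
  repeat (match goal with |- context [form_eq_dec ?a ?b] => destruct (form_eq_dec a b)
          | H : context [form_eq_dec ?a ?b] |- _ => destruct (form_eq_dec a b) end;
          simpl in * ); try subst; try congruence; try lia.

Lemma in_perm {A} (x : A) l : In x l -> exists l', Permutation l (x :: l').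
Proof. intros H. apply in_split in H as (l1 & l2 & ->). exists (l1 ++ l2).
  apply Permutation_sym, Permutation_middle. Qed.

Lemma perm_neq {A} (a b : A) l l' : Permutation (a :: l) (b :: l') -> a <> b ->
  exists l0, Permutation l (b :: l0) /\ Permutation l' (a :: l0).
Proof.
  intros HP Hn. assert (Hb : In b (a :: l)) by (apply Permutation_in with (b :: l'); [symmetry; auto| left; auto]).
  destruct Hb as [->|Hb]; [congruence|].
  destruct (in_perm _ _ Hb) as [l0 Hl0]. exists l0. split; auto.
  apply Permutation_cons_inv with b. rewrite <- HP, Hl0. constructor.
Qed.

Lemma perm_neq2 {A} (a b : A) l l' : Permutation (a :: a :: l) (b :: l') -> b <> a ->
  exists l0, Permutation l (b :: l0) /\ Permutation l' (a :: a :: l0).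
Proof.
  intros HP Hn. assert (Hb : In b (a :: a :: l)) by (apply Permutation_in with (b :: l'); [symmetry; auto| left; auto]).
  destruct Hb as [->|[->|Hb]]; [congruence|congruence|].
  destruct (in_perm _ _ Hb) as [l0 Hl0]. exists l0. split; auto.
  apply Permutation_cons_inv with b. rewrite <- HP, Hl0.
  transitivity (a :: b :: a :: l0); [constructor; apply perm_swap| apply perm_swap].
Qed.

Lemma perm_app_split {A} (a : A) L M N : Permutation (a :: L) (M ++ N) ->
  (exists M', Permutation M (a :: M') /\ Permutation L (M' ++ N)) \/
  (exists N', Permutation N (a :: N') /\ Permutation L (M ++ N')).
Proof.
  intros HP. assert (Ha : In a (M ++ N)) by (apply Permutation_in with (a :: L); auto; left; auto).
  apply in_app_or in Ha as [Ha|Ha]; destruct (in_perm _ _ Ha) as [l0 Hl0].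
  - left. exists l0. split; auto. apply Permutation_cons_inv with a.
    rewrite HP, Hl0. auto.
  - right. exists l0. split; auto. apply Permutation_cons_inv with a.
    rewrite HP, Hl0. symmetry. apply Permutation_middle.
Qed.

Lemma perm_map_box Pi a M' : Permutation (map Box Pi) (a :: M') ->
  exists b Pi', a = Box b /\ Permutation Pi (b :: Pi') /\ M' = map Box Pi'.
Proof.
  intros HP. symmetry in HP. apply Permutation_map_inv in HP as (l3 & He & Hp).
  destruct l3 as [|b Pi']; simpl in He; [discriminate|]. injection He as -> ->.
  exists b, Pi'. auto.
Qed.

Lemma perm_box_app Pi G' X G : Permutation (map Box Pi ++ G') (X :: G) -> (forall b, X <> Box b) ->
  exists G1, Permutation G' (X :: G1) /\ Permutation G (map Box Pi ++ G1).
Proof.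
  intros HP Hn. symmetry in HP. apply perm_app_split in HP as [(M' & HM & _)|(N' & HN & HL)].
  - apply perm_map_box in HM as (b & _ & -> & _). exfalso; eapply Hn; eauto.
  - eauto.
Qed.

Definition notimp (F : form) : Prop := match F with Imp _ _ => False | _ => True end.

Inductive dh : nat -> list form -> list form -> Prop :=
| h_init : forall n G D G' D' A, notimp A -> Permutation G (A :: G') -> Permutation D (A :: D') -> dh n G D
| h_bot : forall n G D G', Permutation G (Bot :: G') -> dh n G D
| h_impL : forall n G D G' A B, Permutation G (Imp A B :: G') -> dh n (B :: G') D -> dh n G' (A :: D) -> dh (S n) G D
| h_impR : forall n G D D' A B, Permutation D (Imp A B :: D') -> dh n (A :: G) (B :: D') -> dh (S n) G D
| h_refl : forall n G D G' B, Permutation G (Box B :: G') -> dh n (B :: Box B :: G') D -> dh (S n) G D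
| h_grz : forall n G D G' D' Pi A, Permutation G (map Box Pi ++ G') -> Permutation D (Box A :: D') ->
    dh n (map Box Pi ++ [Box (Imp A (Box A))]) [A] -> dh (S n) G D.

Lemma dh_mono : forall n G D, dh n G D -> forall m, n <= m -> dh m G D.
Proof.
  induction 1; intros m Hm.
  - eapply h_init; eauto.
  - eapply h_bot; eauto.
  - destruct m as [|m]; [lia|]. eapply h_impL; eauto with arith.
  - destruct m as [|m]; [lia|]. eapply h_impR; eauto with arith.
  - destruct m as [|m]; [lia|]. eapply h_refl; eauto with arith.
  - destruct m as [|m]; [lia|]. eapply h_grz; eauto with arith.
Qed.

Ltac ptrans := match goal with
  | HG : Permutation ?G ?G2, H : Permutation ?G ?X |- Permutation ?G2 _ =>
      exact (Permutation_trans (Permutation_sym HG) H) end.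

Lemma dh_perm : forall n G D, dh n G D -> forall G2 D2, Permutation G G2 -> Permutation D D2 -> dh n G2 D2.
Proof.
  induction 1; intros G2 D2 HG HD.
  - eapply h_init; [eauto|ptrans|ptrans].
  - eapply h_bot; ptrans.
  - eapply h_impL; [ptrans| |]; eauto.
  - eapply h_impR; [ptrans|]. apply IHdh; auto.
  - eapply h_refl; [ptrans|]; eauto.
  - eapply h_grz; [ptrans|ptrans|]; eauto.
Qed.

Lemma dh_wL : forall n G D, dh n G D -> forall X, dh n (X :: G) D.
Proof.
  induction 1; intros X.
  - eapply h_init with (G' := X :: G') (A := A); eauto. perm_solve.
  - eapply h_bot with (G' := X :: G'). perm_solve.
  - eapply h_impL with (G' := X :: G') (A := A) (B := B); [perm_solve| |eauto].
    eapply dh_perm; [apply (IHdh1 X)| |]; perm_solve.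
  - eapply h_impR; eauto. eapply dh_perm; [apply (IHdh X)| |]; perm_solve.
  - eapply h_refl with (G' := X :: G') (B := B); [perm_solve|].
    eapply dh_perm; [apply (IHdh X)| |]; perm_solve.
  - eapply h_grz with (G' := X :: G') (Pi := Pi); eauto. perm_solve.
Qed.

Lemma dh_wR : forall n G D, dh n G D -> forall X, dh n G (X :: D).
Proof.
  induction 1; intros X.
  - eapply h_init with (D' := X :: D') (A := A); eauto. perm_solve.
  - eapply h_bot; eauto.
  - eapply h_impL; eauto. eapply dh_perm; [apply (IHdh2 X)| |]; perm_solve.
  - eapply h_impR with (D' := X :: D') (A := A) (B := B); [perm_solve|].
    eapply dh_perm; [apply (IHdh X)| |]; perm_solve.
  - eapply h_refl; eauto.
  - eapply h_grz with (D' := X :: D') (A := A); eauto. perm_solve.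
Qed.

Lemma inv_impR : forall n G D0, dh n G D0 -> forall a b D, Permutation D0 (Imp a b :: D) -> dh n (a :: G) (b :: D).
Proof.
  induction 1; intros a b E HP.
  - destruct (perm_neq A (Imp a b) D' E) as (l0 & H3 & H4).
    { rewrite <- H1; auto. } { intro; subst; simpl in H; auto. }
    eapply h_init with (A := A) (G' := a :: G') (D' := b :: l0); auto; perm_solve.
  - eapply h_bot with (G' := a :: G'). perm_solve.
  - eapply h_impL with (G' := a :: G') (A := A) (B := B); [perm_solve| |].
    + eapply dh_perm; [apply (IHdh1 a b E HP)| |]; perm_solve.
    + eapply dh_perm; [apply (IHdh2 a b (A :: E))| |]; perm_solve.
  - destruct (form_eq_dec (Imp A B) (Imp a b)) as [He|Hn].
    + injection He as -> ->. apply dh_mono with n; auto.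
      eapply dh_perm; [eauto| |]; perm_solve.
    + destruct (perm_neq (Imp A B) (Imp a b) D' E) as (l0 & H3 & H4).
      { rewrite <- H; auto. } { auto. }
      eapply h_impR with (A := A) (B := B) (D' := b :: l0); [perm_solve|].
      eapply dh_perm; [apply (IHdh a b (B :: l0))| |]; perm_solve.
  - eapply h_refl with (G' := a :: G') (B := B); [perm_solve|].
    eapply dh_perm; [apply (IHdh a b E HP)| |]; perm_solve.
  - destruct (perm_neq (Box A) (Imp a b) D' E) as (l0 & H3 & H4).
    { rewrite <- H0; auto. } { discriminate. }
    eapply h_grz with (G' := a :: G') (D' := b :: l0) (Pi := Pi) (A := A); eauto; perm_solve.
Qed.

Lemma inv_impL : forall n G0 D, dh n G0 D -> forall a b G, Permutation G0 (Imp a b :: G) ->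
  dh n (b :: G) D /\ dh n G (a :: D).
Proof.
  induction 1; intros a b E HP.
  - destruct (perm_neq A (Imp a b) G' E) as (l0 & H3 & H4).
    { rewrite <- H0; auto. } { intro; subst; simpl in H; auto. }
    split; [eapply h_init with (A := A) (G' := b :: l0) (D' := D')
           |eapply h_init with (A := A) (G' := l0) (D' := a :: D')]; auto; perm_solve.
  - destruct (perm_neq Bot (Imp a b) G' E) as (l0 & H3 & H4).
    { rewrite <- H; auto. } { discriminate. }
    split; [eapply h_bot with (G' := b :: l0)|eapply h_bot with (G' := l0)]; perm_solve.
  - destruct (form_eq_dec (Imp A B) (Imp a b)) as [He|Hn].
    + injection He as -> ->. assert (Permutation G' E).
      { apply Permutation_cons_inv with (Imp a b). rewrite <- H, HP. auto. }
      split; (apply dh_mono with n; [|auto]).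
      * eapply dh_perm; [exact H0| |]; perm_solve.
      * eapply dh_perm; [exact H1| |]; perm_solve.
    + destruct (perm_neq (Imp A B) (Imp a b) G' E) as (l0 & H3 & H4).
      { rewrite <- H; auto. } { auto. }
      destruct (IHdh1 a b (B :: l0)) as [I1 I2]; [perm_solve|].
      destruct (IHdh2 a b l0) as [I3 I4]; [perm_solve|].
      split.
      * eapply h_impL with (A := A) (B := B) (G' := b :: l0); [perm_solve| |].
        -- eapply dh_perm; [apply I1| |]; perm_solve.
        -- auto.
      * eapply h_impL with (A := A) (B := B) (G' := l0); [perm_solve| |].
        -- auto.
        -- eapply dh_perm; [apply I4| |]; perm_solve.
  - destruct (IHdh a b (A :: E)) as [I1 I2]; [perm_solve|].
    split.
    + eapply h_impR with (A := A) (B := B) (D' := D'); [auto|].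
      eapply dh_perm; [apply I1| |]; perm_solve.
    + eapply h_impR with (A := A) (B := B) (D' := a :: D'); [perm_solve|].
      eapply dh_perm; [apply I2| |]; perm_solve.
  - destruct (perm_neq (Box B) (Imp a b) G' E) as (l0 & H3 & H4).
    { rewrite <- H; auto. } { discriminate. }
    destruct (IHdh a b (B :: Box B :: l0)) as [I1 I2]; [perm_solve|].
    split.
    + eapply h_refl with (B := B) (G' := b :: l0); [perm_solve|].
      eapply dh_perm; [apply I1| |]; perm_solve.
    + eapply h_refl with (B := B) (G' := l0); [perm_solve|]. auto.
  - destruct (perm_box_app Pi G' (Imp a b) E) as (G1 & H3 & H4).
    { rewrite <- H; auto. } { discriminate. }
    split.
    + eapply h_grz with (Pi := Pi) (G' := b :: G1) (A := A) (D' := D'); eauto; perm_solve.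
    + eapply h_grz with (Pi := Pi) (G' := G1) (A := A) (D' := a :: D'); eauto; perm_solve.
Qed.

Definition CL F := forall n G0 D, dh n G0 D -> forall G, Permutation G0 (F :: F :: G) -> dh n (F :: G) D.
Definition CR F := forall n G D0, dh n G D0 -> forall D, Permutation D0 (F :: F :: D) -> dh n G (F :: D).

Lemma perm_in_l {L M : list form} {x} : Permutation L M -> In x L -> In x M.
Proof. intros; eapply Permutation_in; eauto. Qed.

Lemma CL_gen F : (forall A B, F = Imp A B -> CL B /\ CR A) -> CL F.
Proof.
  intros HF n G0 D Hd. induction Hd; intros E HP.
  - assert (Hi : In A (F :: E)).
    { assert (In A (F :: F :: E)) by (apply (perm_in_l HP), (perm_in_l (Permutation_sym H0)); left; auto).
      destruct H2 as [<-|H2]; [left|]; auto. }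
    destruct (in_perm _ _ Hi) as [l Hl]. eapply h_init; eauto.
  - assert (Hi : In Bot (F :: E)).
    { assert (In Bot (F :: F :: E)) by (apply (perm_in_l HP), (perm_in_l (Permutation_sym H)); left; auto).
      destruct H0 as [<-|H0]; [left|]; auto. }
    destruct (in_perm _ _ Hi) as [l Hl]. eapply h_bot; eauto.
  - destruct (form_eq_dec (Imp A B) F) as [<-|Hn].
    + destruct (HF A B eq_refl) as [HB HA].
      assert (HG : Permutation G' (Imp A B :: E)).
      { apply Permutation_cons_inv with (Imp A B). rewrite <- H, HP. auto. }
      destruct (inv_impL _ _ _ Hd1 A B (B :: E)) as [I1 _]; [perm_solve|].
      destruct (inv_impL _ _ _ Hd2 A B E) as [_ I4]; [auto|].
      eapply h_impL with (G' := E); [auto| |].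
      * eapply HB; [exact I1|auto].
      * eapply HA; [exact I4|auto].
    + destruct (perm_neq2 F (Imp A B) E G') as (l0 & H3 & H4).
      { rewrite <- HP, H. auto. } { auto. }
      eapply h_impL with (A := A) (B := B) (G' := F :: l0); [perm_solve| |].
      * eapply dh_perm; [apply (IHHd1 (B :: l0))| |]; perm_solve.
      * apply IHHd2; auto.
  - eapply h_impR; [exact H|].
    eapply dh_perm; [apply (IHHd (A :: E))| |]; perm_solve.
  - destruct (form_eq_dec (Box B) F) as [<-|Hn].
    + assert (HG : Permutation G' (Box B :: E)).
      { apply Permutation_cons_inv with (Box B). rewrite <- H, HP. auto. }
      eapply h_refl with (G' := E); [auto|].
      eapply dh_perm; [apply (IHHd (B :: E))| |]; perm_solve.
    + destruct (perm_neq2 F (Box B) E G') as (l0 & H3 & H4).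
      { rewrite <- HP, H. auto. } { auto. }
      eapply h_refl with (B := B) (G' := F :: l0); [perm_solve|].
      eapply dh_perm; [apply (IHHd (B :: Box B :: l0))| |]; perm_solve.
  - assert (HP2 : Permutation (F :: F :: E) (map Box Pi ++ G')) by (rewrite <- HP, H; auto).
    destruct (perm_app_split _ _ _ _ HP2) as [(M' & HM & HL)|(N' & HN & HL)].
    + destruct (perm_map_box _ _ _ HM) as (b & Pi' & -> & HPi & ->).
      destruct (perm_app_split _ _ _ _ HL) as [(M2 & HM2 & HL2)|(N2 & HN2 & HL2)].
      * destruct (perm_map_box _ _ _ HM2) as (b' & Pi'' & Hb & HPi' & ->).
        injection Hb as <-.
        pose proof (Permutation_map Box HPi). pose proof (Permutation_map Box HPi').
        simpl in *.
        eapply h_grz with (Pi := b :: Pi'') (G' := G') (D' := D') (A := A); [perm_solve|exact H0|].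
        simpl. apply (IHHd (map Box Pi'' ++ [Box (Imp A (Box A))])). perm_solve.
      * pose proof (Permutation_map Box HPi). simpl in *.
        eapply h_grz with (Pi := Pi) (G' := N2) (D' := D') (A := A); [perm_solve|exact H0|exact Hd].
    + eapply h_grz with (Pi := Pi) (G' := N') (D' := D') (A := A); [perm_solve|exact H0|exact Hd].
Qed.

Lemma CR_gen F : (forall A B, F = Imp A B -> CL A /\ CR B) -> CR F.
Proof.
  intros HF n G D0 Hd. induction Hd; intros E HP.
  - assert (Hi : In A (F :: E)).
    { assert (In A (F :: F :: E)) by (apply (perm_in_l HP), (perm_in_l (Permutation_sym H1)); left; auto).
      destruct H2 as [<-|H2]; [left|]; auto. }
    destruct (in_perm _ _ Hi) as [l Hl]. eapply h_init; eauto.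
  - eapply h_bot; eauto.
  - eapply h_impL; [exact H| |].
    + apply IHHd1; auto.
    + eapply dh_perm; [apply (IHHd2 (A :: E))| |]; perm_solve.
  - destruct (form_eq_dec (Imp A B) F) as [<-|Hn].
    + destruct (HF A B eq_refl) as [HA HB].
      assert (HG : Permutation D' (Imp A B :: E)).
      { apply Permutation_cons_inv with (Imp A B). rewrite <- H, HP. auto. }
      pose proof (inv_impR _ _ _ Hd A B (B :: E)) as I1.
      eapply h_impR with (D' := E); [auto|].
      eapply HB; [|auto]. eapply HA; [|auto]. apply I1. perm_solve.
    + destruct (perm_neq2 F (Imp A B) E D') as (l0 & H3 & H4).
      { rewrite <- HP, H. auto. } { auto. }
      eapply h_impR with (A := A) (B := B) (D' := F :: l0); [perm_solve|].
      eapply dh_perm; [apply (IHHd (B :: l0))| |]; perm_solve.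
  - eapply h_refl; [exact H|]. apply IHHd; auto.
  - destruct (form_eq_dec (Box A) F) as [<-|Hn].
    + assert (HG : Permutation D' (Box A :: E)).
      { apply Permutation_cons_inv with (Box A). rewrite <- H0, HP. auto. }
      eapply h_grz with (D' := E); eauto.
    + destruct (perm_neq2 F (Box A) E D') as (l0 & H3 & H4).
      { rewrite <- HP, H0. auto. } { auto. }
      eapply h_grz with (A := A) (D' := F :: l0); eauto. perm_solve.
Qed.

Lemma contr_all F : CL F /\ CR F.
Proof.
  induction F.
  - split; [apply CL_gen|apply CR_gen]; discriminate.
  - split; [apply CL_gen|apply CR_gen]; discriminate.
  - split; [apply CL_gen|apply CR_gen]; intros A B He; injection He as -> ->; tauto.
  - split; [apply CL_gen|apply CR_gen]; discriminate.
Qed.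

Lemma dh_wL_list : forall L n G D, dh n G D -> dh n (L ++ G) D.
Proof. induction L; simpl; intros; auto. apply dh_wL; auto. Qed.
Lemma dh_wR_list : forall L n G D, dh n G D -> dh n G (L ++ D).
Proof. induction L; simpl; intros; auto. apply dh_wR; auto. Qed.

Lemma dh_cL_list : forall L n G D, incl L G -> dh n (L ++ G) D -> dh n G D.
Proof.
  induction L as [|a L IH]; simpl; intros n G D Hi Hd; auto.
  assert (Ha : In a G) by (apply Hi; left; auto).
  destruct (in_perm _ _ Ha) as [G1 HG1].
  apply IH; [intros x Hx; apply Hi; right; auto|].
  eapply dh_perm; [eapply (proj1 (contr_all a)); [exact Hd|]| |].
  - instantiate (1 := L ++ G1). perm_solve.
  - perm_solve.
  - auto.
Qed.

Lemma dh_cR_list : forall L n G D, incl L D -> dh n G (L ++ D) -> dh n G D.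
Proof.
  induction L as [|a L IH]; simpl; intros n G D Hi Hd; auto.
  assert (Ha : In a D) by (apply Hi; left; auto).
  destruct (in_perm _ _ Ha) as [D1 HD1].
  apply IH; [intros x Hx; apply Hi; right; auto|].
  eapply dh_perm; [eapply (proj2 (contr_all a)); [exact Hd|]| |].
  - instantiate (1 := L ++ D1). perm_solve.
  - auto.
  - perm_solve.
Qed.

Lemma dh_incl : forall n G D G' D', dh n G D -> incl G G' -> incl D D' -> dh n G' D'.
Proof.
  intros n G D G' D' Hd HG HD.
  apply dh_cL_list with G; auto. apply dh_cR_list with D; auto.
  eapply dh_perm; [apply (dh_wL_list G'), (dh_wR_list D'); exact Hd
    | apply Permutation_app_comm| apply Permutation_app_comm].
Qed.

Definition Der G D := exists n, dh n G D.

Lemma Der_incl G D G' D' : Der G D -> incl G G' -> incl D D' -> Der G' D'.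
Proof. intros [n Hd] ? ?. exists n. eapply dh_incl; eauto. Qed.

Lemma dh_sound : forall n G D, dh n G D -> derivable false G D.
Proof.
  induction 1.
  - eapply d_init; eauto.
  - eapply d_bot; eauto.
  - eapply d_impL; eauto.
  - eapply d_impR; eauto.
  - eapply d_refl; eauto.
  - eapply d_grz; eauto.
Qed.

(* Semantics *)
Fixpoint sat {W : Type} (R : W -> W -> Prop) (V : W -> nat -> Prop) (w : W) (F : form) : Prop :=
  match F with
  | Bot => False
  | Atom p => V w p
  | Imp A B => sat R V w A -> sat R V w B
  | Box A => forall v, R w v -> sat R V v A
  end.

Definition grz_frame (W : Type) (R : W -> W -> Prop) : Prop :=
  (forall w, R w w) /\ (forall u v w, R u v -> R v w -> R u w) /\
  (forall u v, R u v -> R v u -> u = v) /\ well_founded (fun u v => R v u /\ u <> v).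

Definition valid (G D : list form) : Prop :=
  forall (W : Type) (R : W -> W -> Prop) (V : W -> nat -> Prop), grz_frame W R ->
  forall w, (forall F, In F G -> sat R V w F) -> exists F, In F D /\ sat R V w F.

Lemma grz_max W R V (HF : grz_frame W R) w A :
  forall v, R w v -> ~ sat R V v A ->
  exists u, R w u /\ ~ sat R V u A /\ (forall t, R u t -> t <> u -> sat R V t A).
Proof.
  destruct HF as (Hr & Ht & Ha & Hw).
  intros v. induction v as [v IH] using (well_founded_ind Hw). intros Hwv Hv.
  destruct (classic (exists t, R v t /\ t <> v /\ ~ sat R V t A)) as [(t & H1 & H2 & H3)|Hn].
  - apply (IH t); eauto.
  - exists v. split; [auto|split; [auto|]]. intros t H1 H2.
    apply NNPP. intro H3. apply Hn. eauto.
Qed.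

Lemma soundness : forall c G D, derivable c G D -> valid G D.
Proof.
  induction 1; intros W R V HF w Hw.
  - exists A. split; [apply (Permutation_in _ (Permutation_sym H0)); left; auto|].
    apply Hw. apply (Permutation_in _ (Permutation_sym H)); left; auto.
  - exfalso. apply (Hw Bot). apply (Permutation_in _ (Permutation_sym H)); left; auto.
  - assert (Hi : sat R V w (Imp A B)) by (apply Hw, (Permutation_in _ (Permutation_sym H)); left; auto).
    destruct (IHderivable2 W R V HF w) as (F & HF1 & HF2).
    { intros F HF'. apply Hw. apply (Permutation_in _ (Permutation_sym H)). right; auto. }
    destruct HF1 as [<-|HF1].
    + apply (IHderivable1 W R V HF w). intros F [<-|HF']; [simpl in Hi; auto|].
      apply Hw, (Permutation_in _ (Permutation_sym H)). right; auto.
    + eauto.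
  - destruct (classic (sat R V w A)) as [HA|HA].
    + destruct (IHderivable W R V HF w) as (F & [<-|HF1] & HF2).
      { intros F [<-|HF']; auto. }
      * exists (Imp A B). split; [apply (Permutation_in _ (Permutation_sym H)); left; auto|].
        simpl; auto.
      * exists F. split; auto. apply (Permutation_in _ (Permutation_sym H)); right; auto.
    + exists (Imp A B). split; [apply (Permutation_in _ (Permutation_sym H)); left; auto|].
      simpl; intros; contradiction.
  - assert (Hi : sat R V w (Box B)) by (apply Hw, (Permutation_in _ (Permutation_sym H)); left; auto).
    apply (IHderivable W R V HF w). intros F [<-|[<-|HF']]; auto.
    + apply Hi. apply (proj1 HF).
    + apply Hw, (Permutation_in _ (Permutation_sym H)). right; auto.
  - exists (Box A). split; [apply (Permutation_in _ (Permutation_sym H0)); left; auto|].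
    apply NNPP. intro Hn. apply not_all_ex_not in Hn as [v Hv].
    apply imply_to_and in Hv as [Hwv Hv].
    destruct (grz_max W R V HF w A v Hwv Hv) as (u & Hwu & Hu & Hmax).
    pose proof HF as (Hr & Ht & Ha & Hwf).
    destruct (IHderivable W R V HF u) as (F & [<-|[]] & HF2); [|contradiction].
    intros F HF'. apply in_app_or in HF' as [HF'|[<-|[]]].
    + apply in_map_iff in HF' as (b & <- & Hb).
      assert (Hwb : sat R V w (Box b)) by (apply Hw, (Permutation_in _ (Permutation_sym H)), in_or_app; left; apply in_map; auto).
      intros t Hut. apply Hwb. eauto.
    + intros t Hut. simpl. intros HtA s Hts.
      destruct (classic (t = u)) as [->|Htu]; [contradiction|].
      destruct (classic (s = u)) as [->|Hsu].
      * exfalso. apply Htu. apply Ha; auto.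
      * apply Hmax; eauto.
  - destruct (classic (sat R V w A)) as [HA|HA].
    + apply (IHderivable2 W R V HF w). intros F [<-|HF']; auto.
    + destruct (IHderivable1 W R V HF w Hw) as (F & [<-|HF1] & HF2); [contradiction|eauto].
Qed.

(* Completeness *)
Fixpoint subf (F : form) : list form :=
  F :: match F with Imp A B => subf A ++ subf B | Box A => subf A | _ => [] end.

Lemma subf_self F : In F (subf F).
Proof. destruct F; left; auto. Qed.

Lemma subf_trans : forall F X, In X (subf F) -> incl (subf X) (subf F).
Proof.
  induction F; simpl; intros X [<-|H]; try apply incl_refl; try contradiction.
  - apply in_app_or in H as [H|H].
    + intros y Hy. right. apply in_or_app. left. eapply IHF1; eauto.
    + intros y Hy. right. apply in_or_app. right. eapply IHF2; eauto.
  - intros y Hy. right. eapply IHF; eauto.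
Qed.

Lemma subf_list L X : In X (flat_map subf L) -> incl (subf X) (flat_map subf L).
Proof.
  intros H. apply in_flat_map in H as (F & HF & HX).
  intros y Hy. apply in_flat_map. exists F. split; auto. eapply subf_trans; eauto.
Qed.

Definition extra (F : form) : list form :=
  match F with Box A => [Imp A (Box A); Box (Imp A (Box A))] | _ => [] end.

Record closed (S Cl : list form) : Prop := {
  c_SCl : incl S Cl;
  c_impCl : forall A B, In (Imp A B) Cl -> In A S /\ In B Cl;
  c_boxCl : forall A, In (Box A) Cl -> In A Cl;
  c_impS : forall A B, In (Imp A B) S -> In A S /\ In B S;
  c_boxS : forall A, In (Box A) S -> In A S /\ In (Box (Imp A (Box A))) Cl }.

Lemma closed_make L : closed (flat_map subf L) (flat_map subf L ++ flat_map extra (flat_map subf L)).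
Proof.
  set (S := flat_map subf L).
  assert (HI : forall A B, In (Imp A B) S -> In A S /\ In B S).
  { intros A B H. pose proof (subf_list L _ H) as Hs. split; apply Hs; simpl; right; apply in_or_app;
    [left|right]; apply subf_self. }
  assert (HB : forall A, In (Box A) S -> In A S).
  { intros A H. pose proof (subf_list L _ H) as Hs. apply Hs; simpl; right; apply subf_self. }
  assert (HE : forall Y, In Y (flat_map extra S) -> exists A, In (Box A) S /\
             (Y = Imp A (Box A) \/ Y = Box (Imp A (Box A)))).
  { intros Y H. apply in_flat_map in H as (X & HX & HY).
    destruct X; simpl in HY; try contradiction. exists X. split; auto.
    destruct HY as [<-|[<-|[]]]; auto. }
  constructor.
  - apply incl_appl, incl_refl.
  - intros A B H. apply in_app_or in H as [H|H].
    + destruct (HI A B H). split; auto. apply in_or_app; auto.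
    + destruct (HE _ H) as (A' & HA' & [He|He]); [|discriminate].
      injection He as -> ->. split; auto. apply in_or_app; auto.
  - intros A H. apply in_app_or in H as [H|H].
    + apply in_or_app; left; auto.
    + destruct (HE _ H) as (A' & HA' & [He|He]); [discriminate|].
      injection He as ->. apply in_or_app; right. apply in_flat_map. exists (Box A'). simpl; auto.
  - auto.
  - intros A H. split; auto. apply in_or_app; right. apply in_flat_map. exists (Box A). simpl; auto.
Qed.

Definition mem (F : form) (X : list form) : bool := if in_dec form_eq_dec F X then true else false.
Definition cnt (L X : list form) : nat := length (filter (fun F => mem F X) L).

Lemma filter_le {A} (p q : A -> bool) L : (forall a, p a = true -> q a = true) ->
  length (filter p L) <= length (filter q L).
Proof.
  intros H. induction L as [|x L IH]; simpl; auto.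
  destruct (p x) eqn:E1; [rewrite (H x E1); simpl; lia|]. destruct (q x); simpl; lia.
Qed.

Lemma filter_lt {A} (p q : A -> bool) L a : (forall a, p a = true -> q a = true) ->
  In a L -> p a = false -> q a = true -> length (filter p L) < length (filter q L).
Proof.
  intros H Hin Hp Hq. induction L as [|x L IH]; simpl; [contradiction|].
  destruct Hin as [->|Hin].
  - rewrite Hp, Hq. simpl. pose proof (filter_le p q L H). lia.
  - specialize (IH Hin). destruct (p x) eqn:E1; [rewrite (H x E1); simpl; lia|].
    destruct (q x); simpl; lia.
Qed.

Lemma mem_true F X : mem F X = true <-> In F X.
Proof. unfold mem. destruct (in_dec form_eq_dec F X); split; auto; discriminate. Qed.
Lemma mem_false F X : mem F X = false <-> ~ In F X.
Proof. unfold mem. destruct (in_dec form_eq_dec F X); split; auto; try discriminate; intros; contradiction. Qed.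

Lemma cnt_mono L X Y : incl X Y -> cnt L X <= cnt L Y.
Proof. intros H. apply filter_le. intros a Ha. apply mem_true, H, mem_true, Ha. Qed.

Lemma cnt_lt L X Y a : incl X Y -> In a L -> ~ In a X -> In a Y -> cnt L X < cnt L Y.
Proof.
  intros H Hin HX HY. apply filter_lt with a; auto.
  - intros b Hb. apply mem_true, H, mem_true, Hb.
  - apply mem_false; auto.
  - apply mem_true; auto.
Qed.

Lemma cnt_len L X : cnt L X <= length L.
Proof. apply filter_length_le. Qed.

Definition saturated (G D : list form) : Prop :=
  (forall A B, In (Imp A B) G -> In B G \/ In A D) /\
  (forall A B, In (Imp A B) D -> In A G /\ In B D) /\
  (forall B, In (Box B) G -> In B G).

Definition good S Cl (w : list form * list form) : Prop :=
  incl (fst w) Cl /\ incl (snd w) S /\ ~ Der (fst w) (snd w) /\ saturated (fst w) (snd w).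

Lemma incl_cons_l {A} (a : A) l : incl l (a :: l).
Proof. intros x H; right; auto. Qed.

Lemma Der_dup_L G D X : In X G -> Der (X :: G) D -> Der G D.
Proof. intros H HD. eapply Der_incl; [exact HD| |apply incl_refl]. intros y [<-|Hy]; auto. Qed.
Lemma Der_dup_R G D X : In X D -> Der G (X :: D) -> Der G D.
Proof. intros H HD. eapply Der_incl; [exact HD|apply incl_refl|]. intros y [<-|Hy]; auto. Qed.

Lemma sat_step S Cl (HC : closed S Cl) G D : incl G Cl -> incl D S -> ~ Der G D -> ~ saturated G D ->
  exists G1 D1, incl G G1 /\ incl D D1 /\ incl G1 Cl /\ incl D1 S /\ ~ Der G1 D1 /\
    cnt Cl G + cnt S D < cnt Cl G1 + cnt S D1.
Proof.
  intros HG HD HN Hs. apply NNPP. intro Hno. apply Hs. split; [|split].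
  - intros A B H. apply NNPP. intro Hn.
    destruct (c_impCl _ _ HC A B (HG _ H)) as [HAS HBC].
    destruct (classic (Der (B :: G) D)) as [[n1 D1]|D1].
    + destruct (classic (Der G (A :: D))) as [[n2 D2]|D2].
      * apply HN. apply Der_dup_L with (Imp A B); auto. exists (Nat.succ (max n1 n2)).
        eapply h_impL with (G' := G); [apply Permutation_refl| |]; eapply dh_mono; eauto; lia.
      * apply Hno. exists G, (A :: D). repeat split; auto using incl_refl, incl_cons_l.
        -- intros x [<-|Hx]; auto.
        -- pose proof (cnt_lt S D (A :: D) A (incl_cons_l A D) HAS ltac:(tauto) ltac:(left; auto)). lia.
    + apply Hno. exists (B :: G), D. repeat split; auto using incl_refl, incl_cons_l.
      * intros x [<-|Hx]; auto.
      * pose proof (cnt_lt Cl G (B :: G) B (incl_cons_l B G) HBC ltac:(tauto) ltac:(left; auto)). lia.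
  - intros A B H. apply NNPP. intro Hn.
    destruct (c_impS _ _ HC A B (HD _ H)) as [HAS HBS].
    destruct (classic (Der (A :: G) (B :: D))) as [[n1 D1]|D1].
    + apply HN. apply Der_dup_R with (Imp A B); auto. exists (Nat.succ n1).
      eapply h_impR with (D' := D); [apply Permutation_refl| auto].
    + apply Hno. exists (A :: G), (B :: D). repeat split; auto using incl_cons_l.
      * intros x [<-|Hx]; auto. apply (c_SCl _ _ HC); auto.
      * intros x [<-|Hx]; auto.
      * pose proof (cnt_mono Cl G (A :: G) (incl_cons_l A G)).
        pose proof (cnt_mono S D (B :: D) (incl_cons_l B D)).
        destruct (classic (In A G)) as [HA|HA].
        -- assert (~ In B D) by tauto.
           pose proof (cnt_lt S D (B :: D) B (incl_cons_l B D) HBS ltac:(tauto) ltac:(left; auto)). lia.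
        -- pose proof (cnt_lt Cl G (A :: G) A (incl_cons_l A G) (c_SCl _ _ HC _ HAS) HA ltac:(left; auto)). lia.
  - intros B H. apply NNPP. intro Hn.
    pose proof (c_boxCl _ _ HC B (HG _ H)) as HBC.
    destruct (classic (Der (B :: G) D)) as [[n1 D1]|D1].
    + apply HN. apply Der_dup_L with (Box B); auto. exists (Nat.succ n1).
      eapply h_refl with (G' := G); [apply Permutation_refl|].
      eapply dh_incl; [exact D1| |apply incl_refl]. intros x [<-|Hx]; [left|right; right]; auto.
    + apply Hno. exists (B :: G), D. repeat split; auto using incl_refl, incl_cons_l.
      * intros x [<-|Hx]; auto.
      * pose proof (cnt_lt Cl G (B :: G) B (incl_cons_l B G) HBC Hn ltac:(left; auto)). lia.
Qed.

Lemma saturate S Cl (HC : closed S Cl) : forall k G D,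
  length Cl + length S - (cnt Cl G + cnt S D) < k ->
  incl G Cl -> incl D S -> ~ Der G D ->
  exists G' D', incl G G' /\ incl D D' /\ good S Cl (G', D').
Proof.
  induction k; intros G D Hk HG HD HN; [lia|].
  destruct (classic (saturated G D)) as [Hs|Hs].
  - exists G, D. exact (conj (incl_refl _) (conj (incl_refl _) (conj HG (conj HD (conj HN Hs))))).
  - destruct (sat_step S Cl HC G D HG HD HN Hs) as (G1 & D1 & H1 & H2 & H3 & H4 & H5 & H6).
    pose proof (cnt_len Cl G1). pose proof (cnt_len S D1).
    destruct (IHk G1 D1) as (G' & D' & I1 & I2 & I3); auto; [lia|].
    exists G', D'. split; [|split]; auto; eapply incl_tran; eauto.
Qed.

Definition Wd := (list form * list form)%type.

Definition strict (w v : Wd) : Prop :=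
  (forall F, In (Box F) (fst w) -> In (Box F) (fst v)) /\
  exists F, In (Box F) (fst v) /\ ~ In (Box F) (fst w).

Definition Rm (Sf Cl : list form) (w v : Wd) : Prop := w = v \/ (good Sf Cl v /\ strict w v).
Definition Vm (w : Wd) (p : nat) : Prop := In (Atom p) (fst w).

Definition isBox (F : form) : bool := match F with Box _ => true | _ => false end.
Definition cntbox (Cl : list form) (w : Wd) : nat :=
  length (filter (fun F => andb (isBox F) (mem F (fst w))) Cl).

Lemma frame_ok Sf Cl : grz_frame Wd (Rm Sf Cl).
Proof.
  split; [|split; [|split]].
  - intros w; left; auto.
  - intros u v w Huv Hvw. destruct Huv as [<-|[Hv [Hs1 (F & HF1 & HF2)]]]; [exact Hvw|].
    destruct Hvw as [<-|[Hw [Ht1 (F' & HF1' & HF2')]]].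
    + right. split; [auto|]. split; [auto|]. exists F; auto.
    + right. split; [auto|]. split; [auto|]. exists F'. split; auto.
  - intros u v [<-|[_ [H1 (F & HF1 & HF2)]]] [E|[_ [H2 _]]]; auto.
    exfalso. apply HF2. auto.
  - apply (well_founded_lt_compat _ (fun u => length Cl - cntbox Cl u)).
    intros u v [[E|[Hg Hst]] Hne]; [congruence|].
    destruct Hst as [H1 (F & HF1 & HF2)].
    assert (cntbox Cl v < cntbox Cl u).
    { apply filter_lt with (Box F).
      - intros a Ha. destruct a; simpl in *; try discriminate.
        apply mem_true, H1, mem_true, Ha.
      - apply (proj1 Hg); auto.
      - simpl. apply mem_false; auto.
      - simpl. apply mem_true; auto. }
    pose proof (filter_length_le (fun F => andb (isBox F) (mem F (fst u))) Cl).
    unfold cntbox in *. lia.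
Qed.

Definition unbox (L : list form) : list form :=
  flat_map (fun F => match F with Box B => [B] | _ => [] end) L.

Lemma unbox_in L b : In b (unbox L) <-> In (Box b) L.
Proof.
  unfold unbox. rewrite in_flat_map. split.
  - intros (F & HF & Hb). destruct F; simpl in Hb; try contradiction.
    destruct Hb as [<-|[]]; auto.
  - intros H. exists (Box b). simpl; auto.
Qed.

Lemma map_box_unbox L : incl (map Box (unbox L)) L.
Proof. intros x Hx. apply in_map_iff in Hx as (b & <- & Hb). apply unbox_in; auto. Qed.

Lemma truth Sf Cl (HC : closed Sf Cl) : forall F w, good Sf Cl w ->
  (In F (fst w) -> sat (Rm Sf Cl) Vm w F) /\ (In F (snd w) -> ~ sat (Rm Sf Cl) Vm w F).
Proof.
  induction F; intros w Hg; pose proof Hg as (HG & HD & HN & H1 & H2 & H3).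
  - split; [|simpl; auto]. intros Hi. exfalso. apply HN.
    destruct (in_perm _ _ Hi) as [l Hl]. exists 0. eapply h_bot; eauto.
  - split; [simpl; unfold Vm; auto|]. intros Hi Hs. simpl in Hs; unfold Vm in Hs. apply HN.
    destruct (in_perm _ _ Hi) as [l Hl]. destruct (in_perm _ _ Hs) as [l' Hl'].
    exists 0. eapply h_init with (A := Atom n); eauto. simpl; auto.
  - split.
    + intros Hi. simpl. intros HA. destruct (H1 _ _ Hi) as [HB|HA'].
      * apply (proj1 (IHF2 w Hg)); auto.
      * exfalso. apply (proj2 (IHF1 w Hg) HA'). auto.
    + intros Hi Hs. destruct (H2 _ _ Hi) as [HA HB].
      apply (proj2 (IHF2 w Hg) HB). apply Hs. apply (proj1 (IHF1 w Hg)); auto.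
  - split.
    + intros Hi v [<-|[Hgv [Hst _]]].
      * apply (proj1 (IHF _ Hg)). apply H3; auto.
      * apply (proj1 (IHF _ Hgv)). destruct Hgv as (_ & _ & _ & _ & _ & H3v). apply H3v, Hst; auto.
    + intros Hi Hs. destruct w as [G D]; simpl in *.
      destruct (classic (In (Box (Imp F (Box F))) G)) as [Hb|Hb].
      * destruct (H1 _ _ (H3 _ Hb)) as [HbF|HFD].
        -- apply HN. destruct (in_perm _ _ HbF) as [l Hl]. destruct (in_perm _ _ Hi) as [l' Hl'].
           exists 0. eapply h_init with (A := Box F); eauto. simpl; auto.
        -- apply (proj2 (IHF _ Hg) HFD). apply Hs. left; auto.
      * set (Pi := unbox G).
        assert (HFS : In F Sf /\ In (Box (Imp F (Box F))) Cl) by (apply (c_boxS _ _ HC), HD; auto).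
        assert (HN1 : ~ Der (map Box Pi ++ [Box (Imp F (Box F))]) [F]).
        { intros [n Hd]. apply HN. apply Der_incl with (map Box Pi ++ G) (Box F :: D).
          - exists (Datatypes.S n). eapply h_grz with (G' := G) (D' := D); eauto; apply Permutation_refl.
          - intros x Hx. apply in_app_or in Hx as [Hx|Hx]; auto. apply map_box_unbox; auto.
          - intros x [<-|Hx]; auto. }
        destruct (saturate Sf Cl HC (Datatypes.S (length Cl + length Sf))
                   (map Box Pi ++ [Box (Imp F (Box F))]) [F]) as (G' & D' & I1 & I2 & I3).
        { lia. }
        { intros x Hx. apply in_app_or in Hx as [Hx|[<-|[]]]; [|tauto].
          apply HG, map_box_unbox; auto. }
        { intros x [<-|[]]; tauto. }
        { auto. }
        apply (proj2 (IHF (G', D') I3)); [apply I2; left; auto|].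
        apply Hs. right. split; auto. split.
        -- intros b Hbb. apply I1, in_or_app. left. apply in_map, unbox_in; auto.
        -- exists (Imp F (Box F)). split; auto. apply I1, in_or_app. right; left; auto.
Qed.

Lemma completeness G D : valid G D -> Der G D.
Proof.
  intros Hv. apply NNPP. intros HN.
  set (Sf := flat_map subf (G ++ D)).
  set (Cl := Sf ++ flat_map extra Sf).
  pose proof (closed_make (G ++ D)) as HC. fold Sf Cl in HC.
  assert (HGS : incl G Sf).
  { intros x Hx. apply in_flat_map. exists x. split; [apply in_or_app; auto|apply subf_self]. }
  assert (HDS : incl D Sf).
  { intros x Hx. apply in_flat_map. exists x. split; [apply in_or_app; auto|apply subf_self]. }
  destruct (saturate Sf Cl HC (Datatypes.S (length Cl + length Sf)) G D) as (G' & D' & I1 & I2 & I3).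
  { lia. } { intros x Hx; apply (c_SCl _ _ HC); auto. } { auto. } { auto. }
  destruct (Hv Wd (Rm Sf Cl) Vm (frame_ok Sf Cl) (G', D')) as (F & HF1 & HF2).
  - intros F HF. apply (proj1 (truth Sf Cl HC F _ I3)). simpl. auto.
  - apply (proj2 (truth Sf Cl HC F _ I3)); simpl; auto.
Qed.

Theorem theorem2p2 : forall (G D : list form),
  GrzSeqCut_proves G D -> GrzSeq_proves G D.
Proof.
  intros G D H. apply soundness in H. apply completeness in H as [n Hd].
  apply (dh_sound n); auto.
Qed.
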